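(* Let $r \ge 3$ and let $n$ be defined by $n=2$ if $r=3$, $n=\lfloor r/2\rfloor$ if $4\le r\le 7$, and $n=\lceil r/2\rceil-1$ if $r\ge 8$. Let $I_1\subseteq\mathbb{F}_3^r$ be the set of vectors with all entries in $\{0,1\}$ having exactly $k$ entries equal to $1$ for some $k\in[n,2n-1]$, and let $I_2=\{2x : x\in I_1\}$. Let $R\subseteq I_1$ be the fixed set of $r$ regular redundant indices chosen by the construction, which forms a basis of $\mathbb{F}_3^r$. The position set is $I=I_1\cup I_2\cup\{O,E\}$, where $O,E$ are two additional positions. A word $v=(v_i)_{i\in I}\in\mathbb{F}_3^{I}$ is an A2 codeword if \[\bigoplus_{i\in I_1\cup I_2} v_i\cdot i = 0\ \text{ in } \mathbb{F}_3^r,\qquad v_O+\sum_{i\in I_1} v_i\equiv 0 \pmod 3,\qquad v_E+\sum_{i\in I_2} v_i\equiv 0\pmod 3.\] The message positions are $M=(I_1\cup I_2)\setminus R$, and a message $X\in\mathbb{F}_3^{M}$ is encoded as the unique A2 codeword $X'$ whose restriction to $M$ equals $X$. Then for any two distinct messages $X\neq Y$, the codewords $X'$ and $Y'$ differ in at least $4$ positions.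
   Context: Index vectors are identified with $r$-trit ternary strings; $\oplus$ denotes componentwise addition modulo $3$ on $\mathbb{F}_3^r$ (the paper calls it ternary XOR), and $v_i\cdot i$ means the vector $i$ scaled by $v_i\in\mathbb{F}_3$. For example, with $r=4$, $n=2$, $R=\{0011,0110,0111,1110\}$ this gives the $[22,16,4]_3$ code. *)

(* Defs.v *)
From mathcomp Require Import all_boot all_algebra.
Set Implicit Arguments. Unset Strict Implicit. Unset Printing Implicit Defensive.
Import GRing.Theory.
Local Open Scope ring_scope.

Definition vec (r : nat) := 'rV['F_3]_r.

Definition nparam (r : nat) : nat :=
  if r == 3 then 2%N
  else if (r <= 7)%N then r./2
  else (uphalf r).-1.

Definition ones (r : nat) (x : vec r) : nat := #|[set j : 'I_r | x 0 j == 1]|.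

Definition I1 (r : nat) : {set vec r} :=
  [set x : vec r | [forall j : 'I_r, (x 0 j == 0) || (x 0 j == 1)]
                   && (nparam r <= ones x <= (nparam r).*2.-1)%N].

Definition I2 (r : nat) : {set vec r} := [set 2%:R *: x | x in I1 r].

Definition pos (r : nat) := option (option (vec r)).
Definition posV (r : nat) (x : vec r) : pos r := Some (Some x).
Definition posO (r : nat) : pos r := Some None.
Definition posE (r : nat) : pos r := None.

Definition Ipos (r : nat) : {set pos r} :=
  [set posV x | x in I1 r :|: I2 r] :|: [set posO r; posE r].

Definition word (r : nat) := {ffun pos r -> 'F_3}.

(* A2 codewords (only values on Ipos matter). *)
Definition A2_codeword (r : nat) (v : word r) : Prop :=
  [/\ \sum_(x in I1 r :|: I2 r) v (posV x) *: x = 0,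
      v (posO r) + \sum_(x in I1 r) v (posV x) = 0
    & v (posE r) + \sum_(x in I2 r) v (posV x) = 0].

Definition Mset (r : nat) (R : {set vec r}) : {set vec r} := (I1 r :|: I2 r) :\: R.

Definition dist (r : nat) (v w : word r) : nat := #|[set p in Ipos r | v p != w p]|.

(* Main.v *)
Require Import Defs.
From mathcomp Require Import all_boot all_algebra.
Import GRing.Theory.
Local Open Scope ring_scope.
Set Implicit Arguments. Unset Strict Implicit.

Lemma F3_all (x : 'F_3) : [\/ x = 0, x = 1 | x = 2%:R].
Proof. case: x => [[|[|[|m]]] Hm]; [constructor 1|constructor 2|constructor 3|by []]; exact: val_inj. Qed.
Lemma eq3 (u v t : 'F_3) : u != 0 -> v != 0 -> t != 0 -> u + v + t = 0 -> u = v /\ v = t.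
Proof. by case: (F3_all u) => ->; case: (F3_all v) => ->; case: (F3_all t) => ->. Qed.
Lemma coord3 (e x y z : 'F_3) : e != 0 -> (x = 0 \/ x = e) -> (y = 0 \/ y = e) -> (z = 0 \/ z = e) -> x != y -> x + y + z != 0.
Proof. by move=> + [->|->] [->|->] [->|->]; case: (F3_all e) => ->. Qed.
Lemma two_nz : (2%:R : 'F_3) != 0. Proof. by []. Qed.

Definition goodv r (e : 'F_3) (x : vec r) := (forall j, x 0 j = 0 \/ x 0 j = e) /\ x != 0.

Lemma nparam_pos r : (3 <= r)%N -> (0 < nparam r)%N.
Proof. case: r => [|[|[|r]]] // _. rewrite /nparam; case: ifP => // _; case: ifP => //. Qed.

Lemma I1_good r x : (3 <= r)%N -> x \in I1 r -> goodv 1 x.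
Proof.
move=> r3; rewrite inE => /andP[/forallP H /andP[Hn _]]; split.
  by move=> j; case/orP: (H j) => /eqP ->; [left|right].
apply/eqP => x0; move: Hn; rewrite x0 /ones.
have -> : [set j : 'I_r | (0 : vec r) 0 j == 1] = set0.
  by apply/setP => j; rewrite !inE mxE eq_sym oner_eq0.
by rewrite cards0 leqNgt nparam_pos.
Qed.

Lemma I2_good r x : (3 <= r)%N -> x \in I2 r -> goodv 2%:R x.
Proof.
move=> r3 /imsetP[y /(I1_good r3) [Hy ny] ->]; split.
  by move=> j; rewrite mxE; case: (Hy j) => ->; [left; rewrite mulr0 | right; rewrite mulr1].
by rewrite scaler_eq0 negb_or two_nz ny.
Qed.

Lemma good_disj r (x : vec r) : goodv 1 x -> goodv 2%:R x -> False.
Proof.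
move=> [H1 n1] [H2 _]; move/negP: n1; apply; apply/eqP/rowP => j; rewrite mxE.
case: (H1 j) => // E1; case: (H2 j) => E2; rewrite E2 in E1; by move: E1.
Qed.

Lemma sum_supp (V : zmodType) r (A : {set vec r}) (w : vec r -> 'F_3) (F : vec r -> V) :
  (forall x, w x = 0 -> F x = 0) ->
  \sum_(x in A) F x = \sum_(x in [set x in A | w x != 0]) F x.
Proof.
move=> HF; rewrite (bigID (fun x => w x != 0)) /= [X in _ + X]big1 ?addr0.
  by apply: eq_bigl => x; rewrite inE.
by move=> x /andP[_ /negbNE/eqP]; apply: HF.
Qed.

Lemma diff_coord r (a b : vec r) : a != b -> exists j, a 0 j != b 0 j.
Proof.
move=> ab; apply/existsP; apply: contraR ab; rewrite negb_exists => /forallP H.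
by apply/eqP/rowP => j; apply/eqP/negPn/H.
Qed.

Lemma pair_nz r (e wa wb : 'F_3) (a b : vec r) : e != 0 -> goodv e a -> goodv e b -> a != b ->
  wa != 0 -> wb != 0 -> wa *: a + wb *: b != 0.
Proof.
move=> e0 [ga _] [gb _] /diff_coord [j Hj] wa0 wb0; apply/eqP => /rowP /(_ j).
rewrite !mxE.
by case: (ga j) (gb j) Hj => -> [->|->]; rewrite ?eqxx // => _; rewrite ?mulr0 ?add0r ?addr0 => /eqP;
  rewrite mulf_eq0 ?(negbTE wa0) ?(negbTE wb0) (negbTE e0).
Qed.

Lemma setfacts r (e : 'F_3) (S : {set vec r}) (w : vec r -> 'F_3) :
  e != 0 -> (forall x, x \in S -> goodv e x /\ w x != 0) ->
  [/\ #|S| = 0%N -> \sum_(x in S) w x = 0 /\ \sum_(x in S) w x *: x = 0,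
      #|S| = 1%N -> \sum_(x in S) w x != 0 /\ \sum_(x in S) w x *: x != 0,
      #|S| = 2%N -> \sum_(x in S) w x *: x != 0
    & #|S| = 3%N -> \sum_(x in S) w x = 0 -> \sum_(x in S) w x *: x != 0].
Proof.
move=> e0 HS; split.
- move/eqP; rewrite cards_eq0 => /eqP ->; by rewrite !big_set0.
- move/eqP/cards1P => [a Sa]. have aS : a \in S by rewrite Sa set11.
  have [[ga na] wa] := HS a aS.
  rewrite Sa !big_set1; split => //; by rewrite scaler_eq0 negb_or wa na.
- move/eqP/cards2P => [a [b [ab Sab]]].
  have aS : a \in S by rewrite Sab !inE eqxx.
  have bS : b \in S by rewrite Sab !inE eqxx orbT.
  have [ga wa] := HS a aS.
  have [gb wb] := HS b bS.
  rewrite Sab big_setU1 ?inE //= big_set1.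
  exact: (pair_nz e0 ga gb ab wa wb).
- move=> S3.
  have /set0Pn [a Sa] : S != set0 by rewrite -card_gt0 S3.
  have : #|S :\ a| == 2%N by move: S3; rewrite (cardsD1 a S) Sa add1n => -[->].
  move/cards2P => [b [c [bc Sbc]]].
  have bS : b \in S :\ a by rewrite Sbc !inE eqxx.
  have cS : c \in S :\ a by rewrite Sbc !inE eqxx orbT.
  have aS : a \notin [set b; c] by rewrite -Sbc !inE eqxx.
  have [ga wa] := HS a Sa.
  have [gb wb] := HS b (subsetP (subD1set S a) _ bS).
  have [gc wc] := HS c (subsetP (subD1set S a) _ cS).
  rewrite -(setD1K Sa) Sbc !big_setU1 //= ?inE ?big_set1 //.
  rewrite addrA => /(eq3 wa wb wc) [eab ebc]; rewrite -ebc -eab -!scalerDr.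
  rewrite scaler_eq0 negb_or wa /=.
  have [j Hj] := diff_coord bc.
  rewrite addrC; apply/eqP => /rowP /(_ j); rewrite !mxE; apply/eqP.
  exact: coord3 e0 (gb.1 j) (gc.1 j) (ga.1 j) Hj.
Qed.

Lemma card_add (T : finType) (B D : {set T}) (p : T) (b : bool) :
  B \subset D -> p \notin B -> (b -> p \in D) ->
  exists2 B' : {set T}, B' \subset D & (#|B'| = #|B| + b)%N /\ B' \subset p |: B.
Proof.
move=> BD pB; case: b => [/(_ isT) pD|_].
  exists (p |: B); last by rewrite cardsU1 pB addnC.
  by rewrite subUset sub1set pD BD.
by exists B; rewrite ?addn0 // subsetU1.
Qed.

Theorem theorem4p1 (r : nat) (R : {set vec r}) :
  (3 <= r)%N ->
  R \subset I1 r -> #|R| = r -> basis_of fullv (enum R) ->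
  forall X' Y' : word r, A2_codeword X' -> A2_codeword Y' ->
  (exists2 x, x \in Mset R & X' (posV x) != Y' (posV x)) ->
  (4 <= dist X' Y')%N.
Proof.
move=> r3 _ _ _ X' Y' [XV XO XE] [YV YO YE] [x0 Mx0 neq0].
pose w : vec r -> 'F_3 := fun x => X' (posV x) - Y' (posV x).
pose dO : 'F_3 := X' (posO r) - Y' (posO r).
pose dE : 'F_3 := X' (posE r) - Y' (posE r).
pose S1 := [set x in I1 r | w x != 0].
pose S2 := [set x in I2 r | w x != 0].
have disj : [disjoint I1 r & I2 r].
  rewrite -setI_eq0; apply/eqP/setP => x; rewrite in_setI in_set0; apply/negP => /andP[h1 h2].
  exact: good_disj (I1_good r3 h1) (I2_good r3 h2).
have e1 := sum_supp (I1 r) (w := w) (F := fun x => w x *: x) (fun x h => etrans (congr1 (fun t => t *: x) h) (scale0r x)).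
have e2 := sum_supp (I2 r) (w := w) (F := fun x => w x *: x) (fun x h => etrans (congr1 (fun t => t *: x) h) (scale0r x)).
have f1 := sum_supp (I1 r) (w := w) (F := w) (fun x h => h).
have f2 := sum_supp (I2 r) (w := w) (F := w) (fun x h => h).
have HV : \sum_(x in S1) w x *: x + \sum_(x in S2) w x *: x = 0.
  rewrite /S1 /S2 -e1 -e2 -bigU //= /w.
  under eq_bigr do rewrite scalerBl.
  by rewrite sumrB !(eq_bigl _ _ (fun i => esym (in_setU i (I1 r) (I2 r)))) XV YV subrr.

have HO : dO + \sum_(x in S1) w x = 0.
  by rewrite /S1 -f1 /w sumrB addrACA -opprD XO YO subrr.
have HE : dE + \sum_(x in S2) w x = 0.
  by rewrite /S2 -f2 /w sumrB addrACA -opprD XE YE subrr.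
have [s10 s11 s12 s13] := setfacts (e := 1) (S := S1) (w := w) (oner_neq0 _)
  (fun x h => let: conj h1 h2 := andP (eqbLR (in_set _ _) h) in conj (I1_good r3 h1) h2).
have [s20 s21 s22 s23] := setfacts (e := 2%:R) (S := S2) (w := w) two_nz
  (fun x h => let: conj h1 h2 := andP (eqbLR (in_set _ _) h) in conj (I2_good r3 h1) h2).
have mS1 : forall x, (x \in S1) = (x \in I1 r) && (w x != 0) by move=> x; rewrite /S1 in_set.
have mS2 : forall x, (x \in S2) = (x \in I2 r) && (w x != 0) by move=> x; rewrite /S2 in_set.
have S12 : S1 :&: S2 = set0.
  apply/setP => x; rewrite in_setI in_set0 mS1 mS2; apply/negP => /andP[/andP[h1 _] /andP[h2 _]].
  exact: good_disj (I1_good r3 h1) (I2_good r3 h2).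
pose D := [set p in Ipos r | X' p != Y' p].
rewrite /dist -/D.
pose A := [set posV x | x in S1 :|: S2].
have cA : #|A| = (#|S1| + #|S2|)%N.
  rewrite card_imset; last by move=> a b [].
  by rewrite cardsU S12 cards0 subn0.
have AD : A \subset D.
  apply/subsetP => p /imsetP [x xS ->]; rewrite /D in_set; apply/andP; split.
    rewrite /Ipos in_setU; apply/orP; left; apply: imset_f.
    by move: xS; rewrite !in_setU mS1 mS2 => /orP[/andP[-> _]|/andP[-> _]]; rewrite ?orbT.
  by move: xS; rewrite in_setU mS1 mS2 => /orP[/andP[_]|/andP[_]]; rewrite /w subr_eq0.
have nOA : posO r \notin A by apply/imsetP => -[].
have ODh : dO != 0 -> posO r \in D.
  by move=> h; rewrite /D in_set /Ipos !in_setU !in_set1 eqxx orbT /= -subr_eq0.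
have [B1 B1D [cB1 B1s]] := card_add AD nOA ODh.
have nEB : posE r \notin B1.
  by apply/negP => /(subsetP B1s); rewrite in_setU1 => /orP[//|/imsetP[]].
have EDh : dE != 0 -> posE r \in D.
  by move=> h; rewrite /D in_set /Ipos !in_setU !in_set1 eqxx !orbT /= -subr_eq0.
have [B2 B2D [cB2 _]] := card_add B1D nEB EDh.
have Dge : (#|S1| + #|S2| + (dO != 0%R) + (dE != 0%R) <= #|D|)%N.
  by rewrite -cA -cB1 -cB2 subset_leq_card.
apply: leq_trans _ Dge.
have wx0 : w x0 != 0 by rewrite /w subr_eq0.
have x0S : x0 \in S1 :|: S2.
  move: Mx0; rewrite /Mset in_setD => /andP[_]; rewrite !in_setU mS1 mS2 wx0 => /orP[->|->] //.
  by rewrite orbT.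
have cpos : (0 < #|S1| + #|S2|)%N.
  have : (0 < #|S1 :|: S2|)%N by apply/card_gt0P; exists x0.
  by rewrite cardsU S12 cards0 subn0.
have O1 : (#|S1| == 1%N) ==> (dO != 0).
  apply/implyP => /eqP /s11 [T1 _]; apply: contraNneq T1 => d0.
  by move: HO; rewrite d0 add0r => ->.
have E1 : (#|S2| == 1%N) ==> (dE != 0).
  apply/implyP => /eqP /s21 [T1 _]; apply: contraNneq T1 => d0.
  by move: HE; rewrite d0 add0r => ->.
have O3 : ((#|S1| == 3%N) && (#|S2| == 0%N)) ==> (dO != 0).
  apply/implyP => /andP[/eqP c1 /eqP c2]; apply/negP => /eqP d0.
  have [_ V2] := s20 c2.
  have T1 : \sum_(x in S1) w x = 0 by move: HO; rewrite d0 add0r.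
  by move: (s13 c1 T1); move: HV; rewrite V2 addr0 => ->; rewrite eqxx.
have E3 : ((#|S1| == 0%N) && (#|S2| == 3%N)) ==> (dE != 0).
  apply/implyP => /andP[/eqP c1 /eqP c2]; apply/negP => /eqP d0.
  have [_ V1] := s10 c1.
  have T2 : \sum_(x in S2) w x = 0 by move: HE; rewrite d0 add0r.
  by move: (s23 c2 T2); move: HV; rewrite V1 add0r => ->; rewrite eqxx.
have N1 : forall k, (k == 1%N) || (k == 2%N) -> ~~ ((#|S1| == k) && (#|S2| == 0%N)).
  move=> k hk; apply/negP => /andP[/eqP c1 /eqP c2].
  have [_ V2] := s20 c2.
  have V1 : \sum_(x in S1) w x *: x != 0.
    by case/orP: hk => /eqP ek; rewrite ek in c1; [case: (s11 c1) | apply: s12].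
  by move: V1; move: HV; rewrite V2 addr0 => ->; rewrite eqxx.
have N2 : forall k, (k == 1%N) || (k == 2%N) -> ~~ ((#|S1| == 0%N) && (#|S2| == k)).
  move=> k hk; apply/negP => /andP[/eqP c1 /eqP c2].
  have [_ V1] := s10 c1.
  have V2 : \sum_(x in S2) w x *: x != 0.
    by case/orP: hk => /eqP ek; rewrite ek in c2; [case: (s21 c2) | apply: s22].
  by move: V2; move: HV; rewrite V1 add0r => ->; rewrite eqxx.
have := N1 1%N isT; have := N1 2%N isT; have := N2 1%N isT; have := N2 2%N isT.
move: cpos O1 E1 O3 E3; clear.
case: (dO != 0); case: (dE != 0);
  case: #|S1| => [|[|[|[|k1]]]]; case: #|S2| => [|[|[|[|k2]]]] //.
Qed.
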